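(* Let $\pi$ be an ASP program and let $\lambda \subseteq \pi$ be a sub-program that is compilable with respect to $\pi$. Then for every answer set $M_\pi$ of $\pi$ there exists an answer set $M_{\pi\setminus\lambda}$ of the program $\pi\setminus\lambda$ such that $M_\pi$ is the unique answer set of the program $\{\, f. \mid f \in M^+_{\pi\setminus\lambda}\,\} \cup \lambda$ (i.e., $\lambda$ together with every positive atom of $M_{\pi\setminus\lambda}$ added as a fact).
   Context: An ASP program is a finite set of rules $h_1 \mid \dots \mid h_n \text{ :- } b_1,\dots,b_m.$ with $n,m\ge 0$, $n+m\neq 0$, where the $h_i$ (the head) are atoms $p(t_1,\dots,t_k)$ with terms being variables or constants, and the $b_j$ (the body) are literals, i.e. atoms $a$ or their default negations $\sim a$. The positive body $body^+_r$ consists of the atoms in the body of $r$, the negative body $body^-_r$ of the negated atoms; a rule with $n=0$ is a constraint, and a rule with $n=1$, $m=0$ is a fact. A sub-program of $\pi$ is any subset of its rules. For a program $\pi$, $U_\pi$ is the set of constants in $\pi$, $B_\pi$ the set of ground atoms built from predicates of $\pi$ and constants of $U_\pi$, and $\mathit{Ground}(\pi)$ is the set of all ground instances of rules of $\pi$ obtained by substituting variables with elements of $U_\pi$. An interpretation $I$ is a consistent set of literals containing, for every $a\in B_\pi$, either $a$ or $\sim a$; $I^+$ denotes its positive literals. $I$ is a model of $\pi$ if for every $r\in \mathit{Ground}(\pi)$ whose body literals are all true in $I$ (i.e. belong to $I$), some head atom of $r$ is true in $I$. The reduct $\pi^I$ of $\mathit{Ground}(\pi)$ w.r.t. $I$ is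 obtained by deleting rules whose negative body is false w.r.t. $I$ and deleting the negative body from the remaining rules. $I$ is an answer set (stable model) of $\pi$ if $I$ is a model of $\pi$ and there is no model $J$ of $\pi^I$ with $J^+\subsetneq I^+$. The dependency graph $DG_\pi$ of $\pi$ has as vertices the predicate names appearing in some rule head of $\pi$, and labeled edges: $(p,q,+)$ if some rule has $p$ in its positive body and $q$ in its head; $(p,q,-)$ if some rule has $p$ in its negative body and $q$ in its head; $(p,q,-)$ if some rule has both $p$ and $q$ in its head. $\pi$ is stratified if $DG_\pi$ has no cycle containing a negative edge. A sub-program $\lambda\subseteq\pi$ is compilable with respect to $\pi$ if (i) $\lambda$ is stratified, and (ii) no predicate name occurring in a head atom of a rule of $\lambda$ occurs anywhere in $\pi\setminus\lambda$. *)

(* Defs.v *)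
From Stdlib Require Import List Relations.
Import ListNotations.

Set Implicit Arguments.

Section ASP.
Variables (P C V : Type).

Inductive term : Type := TVar (v : V) | TConst (c : C).

Record atom : Type := Atom { apred : P; aargs : list term }.

(* A rule  h_1 | ... | h_n :- b_1, ..., b_k, ~ c_1, ..., ~ c_l. *)
Record rule : Type := Rule {
  rhead : list atom;
  rpos  : list atom;
  rneg  : list atom
}.

Definition program := rule -> Prop.

Definition is_program (pi : program) : Prop :=
  (exists l : list rule, forall r, pi r <-> In r l) /\
  (forall r, pi r -> rhead r <> [] \/ rpos r <> [] \/ rneg r <> []).

Definition subprogram (lam pi : program) : Prop := forall r, lam r -> pi r.

Definition prog_diff (pi lam : program) : program := fun r => pi r /\ ~ lam r.

Definition gatom := (P * list C)%type.

Record grule : Type := GRule {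
  ghead : list gatom; gpos : list gatom; gneg : list gatom }.

Definition subst_term (s : V -> C) (t : term) : C :=
  match t with TVar v => s v | TConst c => c end.

Definition subst_atom (s : V -> C) (a : atom) : gatom :=
  (apred a, map (subst_term s) (aargs a)).

Definition subst_rule (s : V -> C) (r : rule) : grule :=
  GRule (map (subst_atom s) (rhead r)) (map (subst_atom s) (rpos r))
        (map (subst_atom s) (rneg r)).

Definition rule_atoms (r : rule) : list atom := rhead r ++ rpos r ++ rneg r.

Definition var_in_rule (v : V) (r : rule) : Prop :=
  exists a, In a (rule_atoms r) /\ In (TVar v) (aargs a).

Definition const_in_rule (c : C) (r : rule) : Prop :=
  exists a, In a (rule_atoms r) /\ In (TConst c) (aargs a).

Definition pred_in_rule (p : P) (r : rule) : Prop :=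
  exists a, In a (rule_atoms r) /\ apred a = p.

Definition pred_in_head (p : P) (r : rule) : Prop :=
  exists a, In a (rhead r) /\ apred a = p.

Definition universe (pi : program) : C -> Prop :=
  fun c => exists r, pi r /\ const_in_rule c r.

Definition ground (U : C -> Prop) (pi : program) : grule -> Prop :=
  fun g => exists r s, pi r /\ (forall v, var_in_rule v r -> U (s v)) /\
                       g = subst_rule s r.

Definition base (U : C -> Prop) (pi : program) : gatom -> Prop :=
  fun a => (exists r, pi r /\ pred_in_rule (fst a) r) /\ Forall U (snd a).

(* An interpretation is represented by its set of true (positive) atoms;
   the remaining atoms of the base are false. *)
Definition interp := gatom -> Prop.

Definition is_model (U : C -> Prop) (pi : program) (I : interp) : Prop :=
  forall g, ground U pi g ->
    (forall a, In a (gpos g) -> I a) ->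
    (forall a, In a (gneg g) -> ~ I a) ->
    exists h, In h (ghead g) /\ I h.

(* J is a model of the reduct pi^I (rules with false negative body kept,
   negative body deleted). *)
Definition is_model_reduct (U : C -> Prop) (pi : program) (I J : interp)
  : Prop :=
  forall g, ground U pi g ->
    (forall a, In a (gneg g) -> ~ I a) ->
    (forall a, In a (gpos g) -> J a) ->
    exists h, In h (ghead g) /\ J h.

Definition strict_subset (J I : interp) : Prop :=
  (forall a, J a -> I a) /\ exists a, I a /\ ~ J a.

Definition answer_set (U : C -> Prop) (pi : program) (I : interp) : Prop :=
  (forall a, I a -> base U pi a) /\
  is_model U pi I /\
  ~ (exists J, strict_subset J I /\ is_model_reduct U pi I J).

Definition unique_answer_set (U : C -> Prop) (pi : program) (I : interp)
  : Prop :=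
  answer_set U pi I /\
  forall I', answer_set U pi I' -> forall a, I' a <-> I a.

Definition pos_edge (pi : program) (p q : P) : Prop :=
  exists r, pi r /\ (exists a, In a (rpos r) /\ apred a = p) /\
            pred_in_head q r.

Definition neg_edge (pi : program) (p q : P) : Prop :=
  (exists r, pi r /\ (exists a, In a (rneg r) /\ apred a = p) /\
             pred_in_head q r) \/
  (exists r i j a b, pi r /\ i <> j /\
     nth_error (rhead r) i = Some a /\ nth_error (rhead r) j = Some b /\
     apred a = p /\ apred b = q).

Definition dg_edge (pi : program) (p q : P) : Prop :=
  pos_edge pi p q \/ neg_edge pi p q.

(* pi is stratified: no cycle of DG_pi goes through a negative edge, i.e. no
   negative edge (p,q) such that p is reachable again from q. *)
Definition stratified (pi : program) : Prop :=
  ~ exists p q, neg_edge pi p q /\ clos_refl_trans P (dg_edge pi) q p.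

Definition compilable (lam pi : program) : Prop :=
  stratified lam /\
  forall p, (exists r, lam r /\ pred_in_head p r) ->
            ~ exists r, prog_diff pi lam r /\ pred_in_rule p r.

Definition fact_of (f : gatom) : rule :=
  Rule [Atom (fst f) (map (@TConst) (snd f))] [] [].

Definition compiled (lam : program) (M : interp) : program :=
  fun r => lam r \/ exists f, M f /\ r = fact_of f.

End ASP.

(* Main.v *)
Require Import Defs.
From Stdlib Require Import List Relations.
From Stdlib Require Import Classical ClassicalEpsilon Lia Wf_nat.
Import ListNotations.

Section Proof.
Variables (P C V : Type).

Lemma subst_fact (s : V -> C) (f : gatom P C) :
  subst_rule s (fact_of V f) = GRule [f] [] [].
Proof.
  destruct f as [p l]. unfold subst_rule, fact_of; simpl.
  unfold subst_atom; simpl.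
  assert (E : map (subst_term s) (map (TConst V) l) = l)
    by (induction l; simpl; congruence).
  rewrite E. reflexivity.
Qed.

Lemma ground_fact (U : C -> Prop) (pg : program P C V) (s : V -> C) f :
  pg (fact_of V f) -> ground U pg (GRule [f] [] []).
Proof.
  intros H. exists (fact_of V f), s. split; [exact H|split].
  - intros v [a [Ha Hv]]. simpl in Ha. destruct Ha as [<-|[]].
    simpl in Hv. apply in_map_iff in Hv. destruct Hv as [x [Hx _]]. discriminate.
  - rewrite subst_fact; reflexivity.
Qed.

Lemma in_atoms_head (r : rule P C V) x : In x (rhead r) -> In x (rule_atoms r).
Proof. intros; unfold rule_atoms; apply in_or_app; left; auto. Qed.
Lemma in_atoms_pos (r : rule P C V) x : In x (rpos r) -> In x (rule_atoms r).
Proof. intros; unfold rule_atoms; apply in_or_app; right; apply in_or_app; left; auto. Qed.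
Lemma in_atoms_neg (r : rule P C V) x : In x (rneg r) -> In x (rule_atoms r).
Proof. intros; unfold rule_atoms; apply in_or_app; right; apply in_or_app; right; auto. Qed.

Lemma ground_sub U (p1 p2 : program P C V) g :
  subprogram p1 p2 -> ground U p1 g -> ground U p2 g.
Proof. intros Hs [r [s [Hr [Hv ->]]]]. exists r, s; auto. Qed.

Definition Qd (pi lam : program P C V) (a : gatom P C) : Prop :=
  exists r, prog_diff pi lam r /\ pred_in_rule (fst a) r.

Lemma Q_of_diff pi lam r (s : V -> C) x :
  prog_diff pi lam r -> In x (rule_atoms r) -> Qd pi lam (subst_atom s x).
Proof. intros Hd Hx. exists r; split; auto. exists x; split; auto. Qed.

Lemma notQ_head pi lam r (s : V -> C) x :
  compilable lam pi -> lam r -> In x (rhead r) -> ~ Qd pi lam (subst_atom s x).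
Proof.
  intros [_ Hc] Hl Hx HQ. apply (Hc (apred x)).
  - exists r; split; auto. exists x; auto.
  - exact HQ.
Qed.

Lemma part1 U (pi lam : program P C V) M :
  compilable lam pi -> answer_set U pi M ->
  answer_set U (prog_diff pi lam) (fun a => M a /\ Qd pi lam a).
Proof.
  intros Hcomp [Hb [Hmod Hmin]]. split; [|split].
  - intros a [HM HQ]. destruct HQ as [r [Hr Hp]]. split.
    + exists r; split; auto.
    + exact (proj2 (Hb a HM)).
  - intros g [r [s [Hr [Hs ->]]]] Hpos Hneg.
    destruct (Hmod (subst_rule s r)) as [h [Hh HMh]].
    + exists r, s; split; [apply (proj1 Hr)| auto].
    + intros a Ha; apply (proj1 (Hpos a Ha)).
    + intros a Ha HMa. apply (Hneg a Ha). split; auto.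
      simpl in Ha. apply in_map_iff in Ha. destruct Ha as [x [<- Hx]].
      apply Q_of_diff with (r := r); auto. apply in_atoms_neg; auto.
    + exists h; split; auto; split; auto.
      simpl in Hh. apply in_map_iff in Hh. destruct Hh as [x [<- Hx]].
      apply Q_of_diff with (r := r); auto. apply in_atoms_head; auto.
  - intros [J [[HJN [a [HNa HJa]]] HJ]]. apply Hmin.
    exists (fun a => J a \/ (M a /\ ~ Qd pi lam a)). split.
    + split.
      * intros b [Hb'|[Hb' _]]; [apply HJN in Hb'; apply Hb'| exact Hb'].
      * exists a; split; [apply HNa|].
        intros [H|[_ H]]; [contradiction| apply H; apply HNa].
    + intros g [r [s [Hr [Hs ->]]]] Hneg Hpos.
      destruct (classic (lam r)) as [Hl|Hl].
      * destruct (Hmod (subst_rule s r)) as [h [Hh HMh]].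
        -- exists r, s; auto.
        -- intros b Hb'. destruct (Hpos b Hb') as [H|[H _]];
             [apply HJN in H; apply H|exact H].
        -- exact Hneg.
        -- exists h; split; auto. right; split; auto.
           simpl in Hh. apply in_map_iff in Hh. destruct Hh as [x [<- Hx]].
           apply notQ_head with (r := r); auto.
      * assert (Hd : prog_diff pi lam r) by (split; auto).
        destruct (HJ (subst_rule s r)) as [h [Hh HJh]].
        -- exists r, s; split; auto.
        -- intros c Hc [HMc HQc]; apply (Hneg c Hc HMc).
        -- intros b Hb'. destruct (Hpos b Hb') as [H|[_ H]]; auto.
           exfalso; apply H.
           simpl in Hb'. apply in_map_iff in Hb'. destruct Hb' as [x [<- Hx]].
           apply Q_of_diff with (r := r); auto. apply in_atoms_pos; auto.
        -- exists h; auto.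
Qed.

Lemma part2 U (pi lam : program P C V) M :
  subprogram lam pi -> answer_set U pi M ->
  answer_set U (compiled lam (fun a => M a /\ Qd pi lam a)) M.
Proof.
  intros Hsub [Hb [Hmod Hmin]]. split; [|split].
  - intros a HMa. destruct (Hb a HMa) as [[r [Hr Hp]] HF]. split; auto.
    destruct (classic (lam r)) as [Hl|Hl].
    + exists r; split; [left; auto| auto].
    + exists (fact_of V a). split.
      * right. exists a. split; auto. split; auto. exists r; split; auto. split; auto.
      * exists (Atom (fst a) (map (TConst V) (snd a))); split; [left; reflexivity| reflexivity].
  - intros g [r [s [[Hl|[f [Hf ->]]] [Hs ->]]]] Hpos Hneg.
    + apply Hmod; auto. exists r, s; auto.
    + rewrite subst_fact. exists f; split; [left; auto| apply Hf].
  - intros [J [[HJM Hex] HJ]]. apply Hmin. exists J. split; [split; auto|].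
    intros g [r [s [Hr [Hs ->]]]] Hneg Hpos.
    destruct (classic (lam r)) as [Hl|Hl].
    + apply HJ; auto. exists r, s; split; [left; auto|auto].
    + destruct (Hmod (subst_rule s r)) as [h [Hh HMh]].
      * exists r, s; auto.
      * intros; apply HJM; auto.
      * exact Hneg.
      * assert (HQh : Qd pi lam h).
        { simpl in Hh. apply in_map_iff in Hh. destruct Hh as [x [<- Hx]].
          apply Q_of_diff with (r := r); [split; auto|]. apply in_atoms_head; auto. }
        destruct (HJ (GRule [h] [] [])) as [h' [Hh' HJh']].
        -- apply (ground_fact U _ s). right. exists h; split; auto.
        -- simpl; tauto.
        -- simpl; tauto.
        -- simpl in Hh'. destruct Hh' as [<-|[]]. exists h; auto.
Qed.

Lemma single_head (lam : program P C V) r :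
  stratified lam -> lam r -> length (rhead r) <= 1.
Proof.
  intros Hs Hl. destruct (rhead r) as [|a [|b t]] eqn:E; simpl; try lia.
  exfalso. apply Hs. exists (apred a), (apred b). split.
  - right. exists r, 0, 1, a, b. split; [exact Hl|split; [discriminate|]].
    rewrite E; simpl. auto.
  - apply rt_step. right. right. exists r, 1, 0, b, a.
    split; [exact Hl|split; [discriminate|]]. rewrite E; simpl. auto.
Qed.

Lemma compiled_head U (lam : program P C V) N g h :
  stratified lam -> ground U (compiled lam N) g -> In h (ghead g) -> ghead g = [h].
Proof.
  intros Hs [r [s [[Hl|[f [Hf ->]]] [Hv ->]]]] H.
  - pose proof (@single_head lam r Hs Hl) as L. simpl in *.
    destruct (rhead r) as [|x [|y t]]; simpl in *; [contradiction| |lia].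
    destruct H as [<-|[]]; reflexivity.
  - rewrite subst_fact in *. simpl in H. destruct H as [<-|[]]; reflexivity.
Qed.

Lemma compiled_edges U (lam : program P C V) N g a :
  ground U (compiled lam N) g -> ghead g = [a] ->
  (forall b, In b (gpos g) -> pos_edge lam (fst b) (fst a)) /\
  (forall c, In c (gneg g) -> neg_edge lam (fst c) (fst a)).
Proof.
  intros [r [s [[Hl|[f [Hf ->]]] [Hv ->]]]] Ha.
  - assert (Ha' : In a (ghead (subst_rule s r))) by (rewrite Ha; left; auto).
    simpl in Ha'. apply in_map_iff in Ha'. destruct Ha' as [x [<- Hx]].
    split.
    + intros b Hb. simpl in Hb. apply in_map_iff in Hb. destruct Hb as [y [<- Hy]].
      exists r. split; auto. split; [exists y; auto| exists x; auto].
    + intros b Hb. simpl in Hb. apply in_map_iff in Hb. destruct Hb as [y [<- Hy]].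
      left. exists r. split; auto. split; [exists y; auto| exists x; auto].
  - rewrite subst_fact; simpl; split; intros ? [].
Qed.

Inductive deriv (G : grule P C -> Prop) (I : interp P C) : gatom P C -> Prop :=
| dv : forall g a, G g -> ghead g = [a] ->
    (forall b, In b (gpos g) -> deriv G I b) ->
    (forall c, In c (gneg g) -> ~ I c) -> deriv G I a.

Lemma answer_deriv U (pg : program P C V) I :
  (forall g h, ground U pg g -> In h (ghead g) -> ghead g = [h]) ->
  answer_set U pg I -> forall a, I a -> deriv (ground U pg) I a.
Proof.
  intros Hh [Hb [Hm Hmin]].
  assert (DI : forall a, deriv (ground U pg) I a -> I a).
  { induction 1 as [g a Hg Ha Hp IH Hn].
    destruct (Hm g Hg IH Hn) as [h [Hh' HI]]. rewrite Ha in Hh'.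
    destruct Hh' as [<-|[]]; exact HI. }
  intros a Ha. apply NNPP; intro Hd. apply Hmin.
  exists (deriv (ground U pg) I). split.
  - split; [exact DI| exists a; auto].
  - intros g Hg Hn Hp.
    destruct (Hm g Hg (fun b Hb => DI b (Hp b Hb)) Hn) as [h [Hh1 _]].
    exists h; split; auto. apply dv with g; auto.
Qed.

Definition ltp (lam : program P C V) (q p : P) : Prop :=
  exists x y, clos_refl_trans P (dg_edge lam) q x /\ neg_edge lam x y /\
              clos_refl_trans P (dg_edge lam) y p.

Lemma ltp_trans lam x q p : ltp lam x q -> ltp lam q p -> ltp lam x p.
Proof.
  intros [x1 [y1 [A1 [B1 C1]]]] [x2 [y2 [A2 [B2 C2]]]].
  exists x1, y1. split; auto. split; auto.
  eapply rt_trans; [exact C1|]. eapply rt_trans; [exact A2|].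
  eapply rt_trans; [apply rt_step; right; exact B2| exact C2].
Qed.

Lemma ltp_irrefl lam p : stratified lam -> ~ ltp lam p p.
Proof.
  intros Hs [x [y [A [B D]]]]. apply Hs. exists x, y. split; auto.
  eapply rt_trans; eauto.
Qed.

Lemma dg_pred (lam : program P C V) q z :
  dg_edge lam q z -> exists r, lam r /\ pred_in_rule q r.
Proof.
  intros [[r [Hr [[a [Ha Hap]] _]]]|[[r [Hr [[a [Ha Hap]] _]]]|[r [i [j [a [b [Hr [_ [Hi [_ [Hap _]]]]]]]]]]]].
  - exists r; split; auto. exists a; split; auto. apply in_atoms_pos; auto.
  - exists r; split; auto. exists a; split; auto. apply in_atoms_neg; auto.
  - exists r; split; auto. exists a; split; auto. apply in_atoms_head.
    eapply nth_error_In; eauto.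
Qed.

Lemma ltp_in (lam : program P C V) (L : list P) q p :
  (forall r, lam r -> forall q, pred_in_rule q r -> In q L) ->
  ltp lam q p -> In q L.
Proof.
  intros HL [x [y [H1 [H2 _]]]]. apply clos_rt_rt1n in H1.
  inversion H1; subst.
  - destruct (@dg_pred lam _ _ (or_intror H2)) as [r [Hr Hp]]. eapply HL; eauto.
  - destruct (@dg_pred lam _ _ H) as [r [Hr Hp]]. eapply HL; eauto.
Qed.

Definition cnt (L : list P) (R : P -> Prop) : nat :=
  length (filter (fun x => if excluded_middle_informative (R x) then true else false) L).

Lemma cnt_le L (R1 R2 : P -> Prop) :
  (forall x, R1 x -> R2 x) -> cnt L R1 <= cnt L R2.
Proof.
  intros H. unfold cnt. induction L as [|a L IH]; simpl; auto.
  destruct (excluded_middle_informative (R1 a)), (excluded_middle_informative (R2 a));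
    simpl; try lia. exfalso; auto.
Qed.

Lemma cnt_lt L (R1 R2 : P -> Prop) q :
  (forall x, R1 x -> R2 x) -> In q L -> R2 q -> ~ R1 q -> cnt L R1 < cnt L R2.
Proof.
  intros H Hq H2 H1. induction L as [|a L IH]; simpl in *; [contradiction|].
  destruct Hq as [<-|Hq].
  - unfold cnt; simpl.
    destruct (excluded_middle_informative (R1 a)); [contradiction|].
    destruct (excluded_middle_informative (R2 a)); [|contradiction].
    simpl. pose proof (@cnt_le L R1 R2 H). unfold cnt in H0. lia.
  - specialize (IH Hq). unfold cnt in *; simpl.
    destruct (excluded_middle_informative (R1 a)), (excluded_middle_informative (R2 a));
      simpl; try lia. exfalso; auto.
Qed.

Lemma inner U (lam : program P C V) N I1 I2 p :
  is_model U (compiled lam N) I2 ->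
  (forall c, ltp lam (fst c) p -> I2 c -> I1 c) ->
  forall a, deriv (ground U (compiled lam N)) I1 a ->
  clos_refl_trans P (dg_edge lam) (fst a) p -> I2 a.
Proof.
  intros Hm Hlt a Hd. induction Hd as [g a Hg Ha Hp IH Hn]. intros Hr.
  destruct (@compiled_edges _ _ _ _ _ Hg Ha) as [Ep En].
  destruct (Hm g Hg) as [h [Hh HI]].
  - intros b Hb. apply IH; auto.
    eapply rt_trans; [apply rt_step; left; apply Ep; auto| exact Hr].
  - intros c Hc HI2. apply (Hn c Hc). apply Hlt; auto.
    exists (fst c), (fst a). split; [apply rt_refl|split; auto].
  - rewrite Ha in Hh; destruct Hh as [<-|[]]; exact HI.
Qed.

Lemma agree U (lam : program P C V) N (L : list P) I1 I2 :
  stratified lam ->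
  (forall r, lam r -> forall q, pred_in_rule q r -> In q L) ->
  answer_set U (compiled lam N) I1 -> answer_set U (compiled lam N) I2 ->
  forall a, I1 a <-> I2 a.
Proof.
  intros Hs HL A1 A2.
  assert (Hh : forall g h, ground U (compiled lam N) g -> In h (ghead g) -> ghead g = [h])
    by (intros; eapply compiled_head; eauto).
  pose proof (@answer_deriv U _ I1 Hh A1) as D1.
  pose proof (@answer_deriv U _ I2 Hh A2) as D2.
  assert (key : forall n p, cnt L (fun x => ltp lam x p) = n ->
                forall a, fst a = p -> (I1 a <-> I2 a)).
  { induction n as [n IHn] using lt_wf_ind. intros p Hn a Ha.
    assert (Hlow : forall c, ltp lam (fst c) p -> (I1 c <-> I2 c)).
    { intros c Hc. apply (IHn (cnt L (fun x => ltp lam x (fst c))) ) with (p := fst c);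
        auto.
      subst n. apply cnt_lt with (q := fst c).
      - intros x Hx. eapply ltp_trans; eauto.
      - eapply ltp_in; eauto.
      - exact Hc.
      - apply ltp_irrefl; auto. }
    split; intro H.
    - apply (@inner U lam N I1 I2 p (proj1 (proj2 A2))); auto.
      + intros c Hc; apply Hlow; auto.
      + rewrite Ha; apply rt_refl.
    - apply (@inner U lam N I2 I1 p (proj1 (proj2 A1))); auto.
      + intros c Hc; apply Hlow; auto.
      + rewrite Ha; apply rt_refl. }
  intros a; apply (key _ (fst a) eq_refl a eq_refl).
Qed.

End Proof.

Theorem theorem1 (P C V : Type) (pi lam : program P C V) :
  is_program pi ->
  subprogram lam pi ->
  compilable lam pi ->
  forall M : interp P C,
    answer_set (universe pi) pi M ->
    exists N : interp P C,
      answer_set (universe pi) (prog_diff pi lam) N /\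
      unique_answer_set (universe pi) (compiled lam N) M.
Proof.
  intros Hprog Hsub Hcomp M HM.
  exists (fun a => M a /\ Qd _ _ _ pi lam a). split; [|split].
  - apply part1; auto.
  - apply part2; auto.
  - destruct Hprog as [[l Hl] _].
    intros I' HI' a.
    apply (@agree P C V (universe pi) lam (fun a => M a /\ Qd P C V pi lam a) (flat_map (fun r => map (@apred P C V) (rule_atoms r)) l) I' M).
    + exact (proj1 Hcomp).
    + intros r Hr q [x [Hx Hq]]. apply in_flat_map. exists r. split.
      * apply Hl. apply Hsub; auto.
      * apply in_map_iff. exists x; auto.
    + exact HI'.
    + apply part2; auto.
Qed.
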